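(* Let $(\Omega,\Sigma,\mathbb{P})$ be an admissible measure space where $\mathbb{P}$ is a probability measure without atoms, and let $\mathcal{J}(\mathbb{P})$ be the set of all Banach ideal spaces $E$ on $(\Omega,\Sigma,\mathbb{P})$ of maximal width satisfying the norming condition $\|\chi_\Omega\|_E=1$ (spaces $E,F$ identified when $E\subset^1F$ and $F\subset^1E$). Then the lattice $\langle\mathcal{J}(\mathbb{P}),\vee,\wedge\rangle$, with $E\vee F=E+F$ and $E\wedge F=E\cap F$ (ordered by $\subset^{1}$), is Dedekind complete.
   Context: $L_0(\mathbb{P})$ is the vector lattice of classes of measurable real functions on $\Omega$, ordered a.e.; $\chi_A$ is the indicator function of $A$. Admissible measure space: $\mu$ complete; a set $A\subset\Omega$ with $A\cap B\in\Sigma$ for all $B\in\Sigma$ of finite measure lies in $\Sigma$; $\mu$ semifinite; $\mu$ has the direct sum property (a family of pairwise disjoint finite-measure sets $A_i$ such that each finite-measure $B$ is, up to a null set, a countable union of sets $B\cap A_i$). A Banach ideal space (BIS) is a vector subspace $E\subset L_0$ with complete norm such that $y\in E$, $|x|\le|y|$ a.e. imply $x\in E$, $\|x\|_E\le\|y\|_E$. Maximal width: the only $z\in L_0$ with $zy=0$ for all $y\in E$ is $z=0$. $E\subset^1F$: $E\subseteq F$ and $\|x\|_F\le\|x\|_E$ for $x\in E$. $\|x\|_{E\cap F}=\max\{\|x\|_E,\|x\|_F\}$; $\|x\|_{E+F}=\inf\{\|u\|_E+\|v\|_F:u+v=x\}$. Dedekind complete: every nonempty subset bounded above has a least upper bound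 and every nonempty subset bounded below has a greatest lower bound in $\langle\mathcal{J}(\mathbb{P}),\subset^1\rangle$. *)

(* Defs.v *)
From HB Require Import structures.
From mathcomp Require Import all_boot all_order all_algebra.
From mathcomp Require Import all_classical all_reals all_analysis.
Set Implicit Arguments. Unset Strict Implicit. Unset Printing Implicit Defensive.
Import Order.TTheory GRing.Theory Num.Theory.
Local Open Scope classical_set_scope.
Local Open Scope ring_scope.

(* Elements of L_0(P) are represented by
   measurable functions T -> R; all notions below are invariant under
   a.e. equality, so they are notions on classes. *)

Section Defs.
Context d (T : measurableType d) (R : realType).

Definition admissible (mu : {measure set T -> \bar R}) : Prop :=
  measure_is_complete mu /\
  (forall A : set T,
      (forall B, measurable B -> (mu B < +oo)%E -> measurable (A `&` B)) ->
      measurable A) /\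
  (forall A, measurable A -> mu A = +oo%E ->
      exists B, [/\ measurable B, B `<=` A, (0 < mu B)%E & (mu B < +oo)%E]) /\
  (exists F : set (set T),
      (forall A, F A -> measurable A /\ (mu A < +oo)%E) /\
      (forall A B, F A -> F B -> A <> B -> A `&` B = set0) /\
      (forall B, measurable B -> (mu B < +oo)%E ->
         exists J : set (set T), [/\ J `<=` F, countable J &
           mu.-negligible (B `\` \bigcup_(A in J) (B `&` A))])).

Definition atomless (mu : {measure set T -> \bar R}) : Prop :=
  forall A, measurable A -> (0 < mu A)%E ->
    exists B, [/\ measurable B, B `<=` A, (0 < mu B)%E & (mu B < mu A)%E].

Variable mu : {measure set T -> \bar R}.

Definition L0 (x : T -> R) : Prop := measurable_fun setT x.

Definition is_BIS (E : set (T -> R)) (N : (T -> R) -> R) : Prop :=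
  E `<=` L0 /\
      E (fun=> 0) /\
      (forall x y, E x -> E y -> E (x \+ y)) /\
      (forall (a : R) x, E x -> E (fun t => a * x t)) /\
      (forall x, E x -> 0 <= N x) /\
      (forall x, E x -> (N x = 0 <-> {ae mu, forall t, x t = 0})) /\
      (forall (a : R) x, E x -> N (fun t => a * x t) = `|a| * N x) /\
      (forall x y, E x -> E y -> N (x \+ y) <= N x + N y) /\
      (forall x y, L0 x -> E y -> {ae mu, forall t, `|x t| <= `|y t|} ->
          E x /\ N x <= N y) /\
      (forall u : nat -> T -> R, (forall n, E (u n)) ->
         (forall e : R, 0 < e -> exists n0, forall m k, (n0 <= m)%N -> (n0 <= k)%N ->
             N (u m \- u k) < e) ->
         exists x, E x /\ forall e : R, 0 < e -> exists n0, forall m, (n0 <= m)%N ->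
             N (u m \- x) < e).

Record BIS := MkBIS { bis_set : set (T -> R); bis_norm : (T -> R) -> R }.

Definition maximal_width (E : BIS) : Prop :=
  forall z, L0 z -> (forall y, bis_set E y -> {ae mu, forall t, z t * y t = 0}) ->
    {ae mu, forall t, z t = 0}.

Definition sub1 (E F : BIS) : Prop :=
  bis_set E `<=` bis_set F /\
  forall x, bis_set E x -> bis_norm F x <= bis_norm E x.

Definition inJ (E : BIS) : Prop :=
  [/\ is_BIS (bis_set E) (bis_norm E), maximal_width E,
      bis_set E (fun=> 1) & bis_norm E (fun=> 1) = 1].

(* Dedekind completeness of <J(P), \subset^1> (J(P) taken modulo the
   identification E ~ F iff E \subset^1 F and F \subset^1 E; a subset of the
   quotient is represented by a family S of members of J(P)). *)
Definition is_upper (S : set BIS) (U : BIS) := forall E, S E -> sub1 E U.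
Definition is_lower (S : set BIS) (L : BIS) := forall E, S E -> sub1 L E.

Definition dedekind_complete_J : Prop :=
  (forall S : set BIS, S `<=` inJ -> S !=set0 ->
     (exists U, inJ U /\ is_upper S U) ->
     exists U, [/\ inJ U, is_upper S U &
                   forall V, inJ V -> is_upper S V -> sub1 U V]) /\
  (forall S : set BIS, S `<=` inJ -> S !=set0 ->
     (exists L, inJ L /\ is_lower S L) ->
     exists L, [/\ inJ L, is_lower S L &
                   forall V, inJ V -> is_lower S V -> sub1 V L]).
End Defs.

(* Main.v *)
Require Import Defs.
From HB Require Import structures.
From mathcomp Require Import all_boot all_order all_algebra.
From mathcomp Require Import all_classical all_reals all_analysis measurable_realfun.
From mathcomp Require Import lra ring.
Import Order.TTheory GRing.Theory Num.Theory.
Set Implicit Arguments. Unset Strict Implicit. Unset Printing Implicit Defensive.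
Local Open Scope classical_set_scope.
Local Open Scope ring_scope.

Section BISlemmas.
Context d (T : measurableType d) (R : realType) (mu : {measure set T -> \bar R}).
Variables (E : set (T -> R)) (N : (T -> R) -> R).
Hypothesis HE : is_BIS mu E N.

Lemma BL0 x : E x -> L0 x. Proof. by case: HE => H _; apply: H. Qed.
Lemma B0 : E (fun=> 0). Proof. by case: HE => _ [H _]. Qed.
Lemma BD x y : E x -> E y -> E (x \+ y). Proof. by case: HE => _ [_ [H _]]; apply: H. Qed.
Lemma BZ a x : E x -> E (fun t => a * x t). Proof. by case: HE => _ [_ [_ [H _]]]; apply: H. Qed.
Lemma Bge0 x : E x -> 0 <= N x. Proof. by case: HE => _ [_ [_ [_ [H _]]]]; apply: H. Qed.
Lemma Bae x : E x -> (N x = 0 <-> {ae mu, forall t, x t = 0}).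
Proof. by case: HE => _ [_ [_ [_ [_ [H _]]]]]; apply: H. Qed.
Lemma Bhom a x : E x -> N (fun t => a * x t) = `|a| * N x.
Proof. by case: HE => _ [_ [_ [_ [_ [_ [H _]]]]]]; apply: H. Qed.
Lemma Btri x y : E x -> E y -> N (x \+ y) <= N x + N y.
Proof. by case: HE => _ [_ [_ [_ [_ [_ [_ [H _]]]]]]]; apply: H. Qed.
Lemma Bideal x y : L0 x -> E y -> {ae mu, forall t, `|x t| <= `|y t|} -> E x /\ N x <= N y.
Proof. by case: HE => _ [_ [_ [_ [_ [_ [_ [_ [H _]]]]]]]]; apply: H. Qed.
Lemma Bcompl (u : nat -> T -> R) : (forall n, E (u n)) ->
         (forall e : R, 0 < e -> exists n0, forall m k, (n0 <= m)%N -> (n0 <= k)%N ->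
             N (u m \- u k) < e) ->
         exists x, E x /\ forall e : R, 0 < e -> exists n0, forall m, (n0 <= m)%N ->
             N (u m \- x) < e.
Proof. by case: HE => _ [_ [_ [_ [_ [_ [_ [_ [_ H]]]]]]]]; apply: H. Qed.

Lemma BN0 : N (fun=> 0) = 0.
Proof. by apply/(Bae B0); apply: aeW. Qed.

Lemma Bideal' x y : L0 x -> E y -> (forall t, `|x t| <= `|y t|) -> E x /\ N x <= N y.
Proof. by move=> Lx Ey H; apply: Bideal => //; apply: aeW. Qed.

Lemma BB x y : E x -> E y -> E (x \- y).
Proof.
move=> Ex Ey; have -> : x \- y = x \+ (fun t => -1 * y t).
  by apply: funext => t /=; rewrite mulN1r.
by apply: BD => //; apply: BZ.
Qed.

Lemma Btri3 x y z : E x -> E y -> E z -> N (x \- z) <= N (x \- y) + N (y \- z).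
Proof.
move=> Ex Ey Ez; have -> : x \- z = (x \- y) \+ (y \- z).
  by apply: funext => t /=; rewrite addrA subrK.
by apply: Btri; apply: BB.
Qed.

Lemma Bswap x y : E x -> E y -> N (x \- y) = N (y \- x).
Proof.
move=> Ex Ey; apply/eqP; rewrite eq_le; apply/andP; split.
  apply: (proj2 (Bideal' (x := x \- y) (y := y \- x) _ _ _)).
  - by apply: measurable_funB; exact: BL0.
  - exact: BB.
  - by move=> t /=; rewrite distrC.
apply: (proj2 (Bideal' (x := y \- x) (y := x \- y) _ _ _)).
- by apply: measurable_funB; exact: BL0.
- exact: BB.
- by move=> t /=; rewrite distrC.
Qed.

Lemma Babs x : E x -> E (fun t => `|x t|) /\ N (fun t => `|x t|) <= N x.
Proof.
move=> Ex; apply: Bideal' => //; last by move=> t; rewrite normr_id.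
exact: (measurableT_comp (@normr_measurable _ _) (BL0 Ex)).
Qed.

Lemma Bsum (I : Type) (r : seq I) (g : I -> T -> R) : (forall i, E (g i)) ->
  E (fun t => \sum_(i <- r) g i t) /\ N (fun t => \sum_(i <- r) g i t) <= \sum_(i <- r) N (g i).
Proof.
move=> Eg; elim: r => [|a r [IH1 IH2]].
  have -> : (fun t => \sum_(i <- [::]) g i t) = fun=> 0.
    by apply: funext => t; rewrite big_nil.
  by rewrite big_nil BN0; split => //; apply: B0.
have -> : (fun t => \sum_(i <- a :: r) g i t) = g a \+ (fun t => \sum_(i <- r) g i t).
  by apply: funext => t; rewrite big_cons.
rewrite big_cons; split; first by apply: BD.
apply: le_trans (Btri (Eg a) IH1) _; exact: lerD.
Qed.


Lemma tele (c : nat -> R) k m : (k <= m)%N ->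
  \sum_(k <= j < m) (c j - c j.+1) = c k - c m.
Proof.
move=> km; rewrite (telescope_sumr_eq (fun j => - c j)) //.
  by rewrite opprK addrC.
by move=> j _; rewrite opprK addrC.
Qed.

Lemma RF (f : nat -> T -> R) (c : nat -> R) :
  (forall k, E (f k)) -> (forall k, N (f k) <= c k - c k.+1) -> (forall k, 0 <= c k) ->
  (forall e, 0 < e -> exists n0, forall j, (n0 <= j)%N -> c j < e) ->
  exists s, {ae mu, forall t K, \sum_(0 <= k < K) `|f k t| <= s t}.
Proof.
move=> Ef Nf c0 cto.
pose S K := fun t => \sum_(0 <= k < K) `|f k t|.
have Eabs k : E (fun t => `|f k t|) := (Babs (Ef k)).1.
have ES K : E (S K) := (Bsum (index_iota 0 K) Eabs).1.
have mono K L : (K <= L)%N -> forall t, S K t <= S L t.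
  move=> KL t; rewrite /S (big_cat_nat (leq0n K) KL) /= lerDl.
  by apply: sumr_ge0 => *; exact: normr_ge0.
have diff K L : (K <= L)%N -> N (S L \- S K) <= c K.
  move=> KL.
  have -> : S L \- S K = fun t => \sum_(K <= j < L) `|f j t|.
    by apply: funext => t; rewrite /S /= (big_cat_nat (leq0n K) KL) /= addrC addrK.
  apply: le_trans (Bsum _ Eabs).2 _.
  apply: (@le_trans _ _ (\sum_(K <= j < L) (c j - c j.+1))).
    by apply: ler_sum => j _; apply: le_trans (Babs (Ef j)).2 (Nf j).
  by rewrite tele // lerBlDr lerDl.
have cauchy : forall e : R, 0 < e -> exists n0, forall m k, (n0 <= m)%N -> (n0 <= k)%N ->
             N (S m \- S k) < e.
  move=> e e0; have [n0 Hn0] := cto e e0; exists n0 => m k Hm Hk.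
  case: (leqP k m) => km.
    by apply: le_lt_trans (diff _ _ km) _; apply: Hn0.
  rewrite Bswap //; apply: le_lt_trans (diff _ _ (ltnW km)) _; exact: Hn0.
have [s [Es Hs]] := Bcompl ES cauchy.
exists s; apply: ae_foralln => K.
pose p := fun t => Num.max (S K t - s t) 0.
have Lp : L0 p.
  apply: measurable_maxr; [apply: measurable_funB; exact: BL0 | exact: measurable_cst].
have key : forall L, (K <= L)%N -> E p /\ N p <= N (S L \- s).
  move=> L KL; apply: Bideal' => //; [exact: BB | move=> t].
  have := mono K L KL t => h.
  rewrite /p ger0_norm; last by rewrite le_max lexx orbT.
  rewrite ge_max normr_ge0 andbT; apply: le_trans (ler_norm _).
  by rewrite lerB.
have Ep := (key K (leqnn K)).1.
have Nle : N p <= 0.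
  rewrite leNgt; apply/negP => Npos; have [n0 Hn0] := Hs _ Npos.
  have a := (key (maxn K n0) (leq_maxl _ _)).2.
  have b := Hn0 (maxn K n0) (leq_maxr _ _).
  by have := le_lt_trans a b; rewrite ltxx.
have Np0 : N p = 0 by apply/eqP; rewrite eq_le Nle Bge0.
have := (Bae Ep).1 Np0; apply: filterS => t h.
have : S K t - s t <= p t by rewrite /p le_max lexx.
by rewrite h subr_le0.
Qed.

End BISlemmas.

Section Uniq.
Context d (T : measurableType d) (R : realType) (mu : {measure set T -> \bar R}).

Lemma LimUniq (E1 E2 : set (T -> R)) N1 N2 (u : nat -> T -> R) a b :
  is_BIS mu E1 N1 -> is_BIS mu E2 N2 ->
  (forall n, E1 (u n)) -> (forall n, E2 (u n)) -> E1 a -> E2 b ->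
  (forall e : R, 0 < e -> exists n0, forall m, (n0 <= m)%N -> N1 (u m \- a) < e) ->
  (forall e : R, 0 < e -> exists n0, forall m, (n0 <= m)%N -> N2 (u m \- b) < e) ->
  {ae mu, forall t, a t = b t}.
Proof.
move=> H1 H2 Eu1 Eu2 Ea Eb ha hb.
pose c k := ((k.+1)%:R : R)^-1.
have cpos k : 0 < c k - c k.+1.
  by rewrite subr_gt0 /c ltf_pV2 ?posrE ?ltr0n ?ltr_nat.
have c0 k : 0 <= c k by rewrite /c invr_ge0 ler0n.
have cto e : 0 < e -> exists n0, forall j, (n0 <= j)%N -> c j < e.
  move=> e0; exists (Num.Def.archi_bound e^-1) => j hj; rewrite /c.
  rewrite -(invrK e) ltf_pV2 ?posrE ?invr_gt0 ?ltr0n //.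
  apply: lt_le_trans (archi_boundP _) _; first by rewrite invr_ge0 ltW.
  by rewrite ler_nat; apply: leqW.
have pick k : exists n, N1 (u n \- a) < c k - c k.+1 /\ N2 (u n \- b) < c k - c k.+1.
  have [n1 h1] := ha _ (cpos k); have [n2 h2] := hb _ (cpos k).
  by exists (maxn n1 n2); split; [apply: h1; apply: leq_maxl | apply: h2; apply: leq_maxr].
have [phi hphi] := choice pick.
have [s1 hs1] := RF H1 (f := fun k => u (phi k) \- a) (c := c)
   (fun k => BB H1 (Eu1 _) Ea) (fun k => ltW (hphi k).1) c0 cto.
have [s2 hs2] := RF H2 (f := fun k => u (phi k) \- b) (c := c)
   (fun k => BB H2 (Eu2 _) Eb) (fun k => ltW (hphi k).2) c0 cto.
apply: filterS2 hs1 hs2 => t h1 h2.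
pose D := `|a t - b t|.
have bnd K : D *+ K <= s1 t + s2 t.
  have := lerD (h1 K) (h2 K); apply: le_trans.
  have -> : D *+ K = \sum_(0 <= k < K) D by rewrite sumr_const_nat subn0.
  rewrite -big_split /=.
  apply: ler_sum => k _ /=.
  rewrite /D (_ : a t - b t = (u (phi k) t - b t) - (u (phi k) t - a t)); last first.
    by ring.
  by rewrite addrC ler_normB.
have s0 : 0 <= s1 t + s2 t by have := bnd 0%N; rewrite mulr0n.
apply/eqP; rewrite -subr_eq0 -normr_eq0; apply/eqP.
apply/eqP; rewrite eq_le normr_ge0 andbT -/D leNgt; apply/negP => Dpos.
have hK := archi_boundP (divr_ge0 s0 (ltW Dpos)).
rewrite ltr_pdivrMr // mulr_natl in hK.
by have := lt_le_trans hK (bnd _); rewrite ltxx.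
Qed.

End Uniq.

Section Meet.
Context d (T : measurableType d) (R : realType) (mu : {measure set T -> \bar R}).

Definition MeetS (F : set (BIS T R)) : set (T -> R) :=
  fun x => (forall V, F V -> bis_set V x) /\ exists M, forall V, F V -> bis_norm V x <= M.
Definition MeetN (F : set (BIS T R)) (x : T -> R) : R :=
  sup [set r | exists2 V, F V & r = bis_norm V x].
Definition Meet F := MkBIS (MeetS F) (MeetN F).

Variable F : set (BIS T R).
Hypothesis HF : F `<=` inJ mu.
Hypothesis F0 : F !=set0.

Let HV V : F V -> is_BIS mu (bis_set V) (bis_norm V).
Proof. by move=> /HF []. Qed.

Lemma meet_ub x V : MeetS F x -> F V -> bis_norm V x <= MeetN F x.
Proof.
move=> [_ [M hM]] FV; apply: ub_le_sup; last by exists V.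
by exists M => r [W FW ->]; exact: hM.
Qed.

Lemma meet_le x M : (forall V, F V -> bis_norm V x <= M) -> MeetN F x <= M.
Proof.
move=> h; apply: ge_sup; last by move=> r [V FV ->]; exact: h.
by have [V FV] := F0; exists (bis_norm V x), V.
Qed.

Lemma meetD x y : MeetS F x -> MeetS F y -> MeetS F (x \+ y).
Proof.
move=> [hx [Mx hMx]] [hy [My hMy]]; split.
  by move=> V FV; apply: (BD (HV FV)); [apply: hx|apply: hy].
exists (Mx + My) => V FV.
apply: le_trans (Btri (HV FV) (hx V FV) (hy V FV)) _.
by apply: lerD; [apply: hMx|apply: hMy].
Qed.

Lemma meetZ a x : MeetS F x -> MeetS F (fun t => a * x t).
Proof.
move=> [hx [Mx hMx]]; split.
  by move=> V FV; apply: (BZ (HV FV)); apply: hx.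
exists (`|a| * Mx) => V FV; rewrite (Bhom (HV FV)) //; last exact: hx.
by apply: ler_wpM2l (normr_ge0 _) _ _ (hMx V FV).
Qed.

Lemma meetB x y : MeetS F x -> MeetS F y -> MeetS F (x \- y).
Proof.
move=> hx hy; have -> : x \- y = x \+ (fun t => -1 * y t).
  by apply: funext => t /=; rewrite mulN1r.
by apply: meetD => //; apply: meetZ.
Qed.

Lemma meet_ge0 x : MeetS F x -> 0 <= MeetN F x.
Proof.
move=> Hx; have [V FV] := F0.
exact: le_trans (Bge0 (HV FV) (Hx.1 V FV)) (meet_ub Hx FV).
Qed.

Lemma meet_BIS : is_BIS mu (MeetS F) (MeetN F).
Proof.
have h1 : MeetS F `<=` (@L0 _ T R).
  by move=> x [hx _]; have [V FV] := F0; exact (BL0 (HV FV) (hx V FV)).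
have h2 : MeetS F (fun=> 0).
  split; first by move=> V FV; exact: B0 (HV FV).
  by exists 0 => V FV; rewrite (BN0 (HV FV)).
have h6 : forall x, MeetS F x -> (MeetN F x = 0 <-> {ae mu, forall t, x t = 0}).
  move=> x Hx; split.
    move=> h; have [V FV] := F0; apply/(Bae (HV FV) (Hx.1 V FV)).
    apply/eqP; rewrite eq_le (Bge0 (HV FV) (Hx.1 V FV)) andbT -h; exact: meet_ub.
  move=> hae; apply/eqP; rewrite eq_le meet_ge0 // andbT; apply: meet_le => V FV.
  by rewrite ((Bae (HV FV) (Hx.1 V FV)).2 hae).
have h7 : forall a x, MeetS F x -> MeetN F (fun t => a * x t) = `|a| * MeetN F x.
  move=> a x Hx; apply/eqP; rewrite eq_le; apply/andP; split.
    apply: meet_le => V FV; rewrite (Bhom (HV FV)); last exact: Hx.1.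
    by apply: ler_wpM2l (normr_ge0 _) _ _ (meet_ub Hx FV).
  have [->|a0] := eqVneq a 0; first by rewrite normr0 mul0r meet_ge0 //; apply: meetZ.
  have pa : 0 < `|a| by rewrite normr_gt0.
  rewrite mulrC -ler_pdivlMr //; apply: meet_le => V FV.
  rewrite ler_pdivlMr // mulrC -(Bhom (HV FV)); last exact: Hx.1.
  by apply: meet_ub => //; apply: meetZ.
have h8 : forall x y, MeetS F x -> MeetS F y -> MeetN F (x \+ y) <= MeetN F x + MeetN F y.
  move=> x y Hx Hy; apply: meet_le => V FV.
  apply: le_trans (Btri (HV FV) (Hx.1 V FV) (Hy.1 V FV)) _.
  by apply: lerD; apply: meet_ub.
have h9 : forall x y, L0 x -> MeetS F y -> {ae mu, forall t, `|x t| <= `|y t|} ->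
          MeetS F x /\ MeetN F x <= MeetN F y.
  move=> x y Lx Hy hae.
  have hV V : F V -> bis_set V x /\ bis_norm V x <= bis_norm V y.
    by move=> FV; apply: (Bideal (HV FV)) => //; exact: Hy.1.
  have Hx : MeetS F x.
    split; first by move=> V FV; exact: (hV V FV).1.
    exists (MeetN F y) => V FV; apply: le_trans (hV V FV).2 _; exact: meet_ub.
  split => //; apply: meet_le => V FV; apply: le_trans (hV V FV).2 _; exact: meet_ub.
have h10 : forall u : nat -> T -> R, (forall n, MeetS F (u n)) ->
         (forall e : R, 0 < e -> exists n0, forall m k, (n0 <= m)%N -> (n0 <= k)%N ->
             MeetN F (u m \- u k) < e) ->
         exists x, MeetS F x /\ forall e : R, 0 < e -> exists n0, forall m, (n0 <= m)%N ->
             MeetN F (u m \- x) < e.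
  move=> u Eu hc.
  have [V0 FV0] := F0.
  have cV V : F V -> forall e : R, 0 < e -> exists n0, forall m k, (n0 <= m)%N -> (n0 <= k)%N ->
      bis_norm V (u m \- u k) < e.
    move=> FV e e0; have [n0 hn0] := hc e e0; exists n0 => m k hm hk.
    apply: le_lt_trans (hn0 m k hm hk); apply: meet_ub => //; apply: meetB; exact: Eu.
  have [x [Ex0 hx0]] := Bcompl (HV FV0) (fun n => (Eu n).1 V0 FV0) (cV V0 FV0).
  have Lx : L0 x by exact (BL0 (HV FV0) Ex0).
  have A V : F V -> bis_set V x /\ forall e : R, 0 < e -> exists n0, forall m, (n0 <= m)%N ->
      bis_norm V (u m \- x) < e.
    move=> FV; have [xV [ExV hxV]] := Bcompl (HV FV) (fun n => (Eu n).1 V FV) (cV V FV).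
    have hae := LimUniq (HV FV0) (HV FV) (fun n => (Eu n).1 V0 FV0) (fun n => (Eu n).1 V FV)
      Ex0 ExV hx0 hxV.
    have ExV' : bis_set V x.
      by apply: (proj1 (Bideal (HV FV) Lx ExV _)); apply: filterS hae => t ->.
    split => // e e0; have [n0 hn0] := hxV e e0; exists n0 => m hm.
    apply: le_lt_trans (hn0 m hm).
    apply: (proj2 (Bideal (HV FV) _ (BB (HV FV) ((Eu m).1 V FV) ExV) _)).
    - by apply: measurable_funB; [exact (BL0 (HV FV) ((Eu m).1 V FV))| exact Lx].
    - by apply: filterS hae => t /= ->.
  have B e : 0 < e -> exists n0, forall m, (n0 <= m)%N -> forall V, F V ->
      bis_norm V (u m \- x) <= e / 2.
    move=> e0; have e4 : 0 < e / 4 by rewrite divr_gt0.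
    have [n0 hn0] := hc _ e4.
    exists n0 => m hm V FV.
    have [E1 hA] := A V FV; have [n1 hn1] := hA _ e4.
    pose k := maxn n0 n1.
    apply: le_trans (Btri3 (HV FV) ((Eu m).1 V FV) ((Eu k).1 V FV) E1) _.
    have g1 : bis_norm V (u m \- u k) <= e / 4.
      exact: ltW (le_lt_trans (meet_ub (meetB (Eu m) (Eu k)) FV) (hn0 m k hm (leq_maxl _ _))).
    have g2 := ltW (hn1 k (leq_maxr _ _)).
    lra.
  have Hx : MeetS F x.
    split; first by move=> V FV; exact: (A V FV).1.
    have [n0 hn0] := B 1 ltr01.
    exists (1 / 2 + MeetN F (u n0)) => V FV.
    have [EV _] := A V FV.
    have := Btri3 (HV FV) EV ((Eu n0).1 V FV) (B0 (HV FV)).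
    have -> : x \- (fun=> 0) = x by apply: funext => t /=; rewrite subr0.
    have -> : u n0 \- (fun=> 0) = u n0 by apply: funext => t /=; rewrite subr0.
    rewrite (Bswap (HV FV) EV ((Eu n0).1 V FV)).
    move=> h; apply: le_trans h _; apply: lerD; first exact: hn0.
    exact: meet_ub.
  exists x; split => // e e0.
  have [n0 hn0] := B e e0; exists n0 => m hm.
  apply: (@le_lt_trans _ _ (e / 2)).
    by apply: meet_le => V FV; exact: hn0.
  lra.
exact: (conj h1 (conj h2 (conj meetD (conj meetZ (conj meet_ge0 (conj h6 (conj h7
   (conj h8 (conj h9 h10))))))))).
Qed.

Lemma meet_inJ : inJ mu (Meet F).
Proof.
have H1 : MeetS F (fun=> 1).
  split; first by move=> V FV; have [] := HF FV.
  by exists 1 => V FV; have [_ _ _ ->] := HF FV.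
split => //=.
- exact: meet_BIS.
- by move=> z Lz hz; have := hz _ H1; apply: filterS => t; rewrite mulr1.
- apply/eqP; rewrite eq_le; apply/andP; split.
    by apply: meet_le => V FV; have [_ _ _ ->] := HF FV.
  have [V FV] := F0; apply: le_trans (meet_ub H1 FV).
  by have [_ _ _ ->] := HF FV.
Qed.

Lemma sub1_meet (E : BIS T R) : (forall V, F V -> sub1 E V) -> sub1 E (Meet F).
Proof.
move=> h; split => x Ex /=.
- split; first by move=> V FV; exact: (h V FV).1 _ Ex.
  by exists (bis_norm E x) => V FV; exact: (h V FV).2 _ Ex.
- by apply: meet_le => V FV; exact: (h V FV).2 _ Ex.
Qed.

Lemma meet_sub1 V : F V -> sub1 (Meet F) V.
Proof. by move=> FV; split => x Hx /=; [exact: Hx.1 | exact: meet_ub]. Qed.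

End Meet.

Unset Implicit Arguments.
Theorem theorem2 (d : measure_display) (T : measurableType d) (R : realType)
  (P : probability T R) :
  admissible P -> atomless P -> dedekind_complete_J P.
Proof.
move=> _ _; split.
- move=> S SJ S0 [U0 [JU0 uU0]].
  pose G := [set V | inJ P V /\ is_upper S V].
  have GJ : G `<=` inJ P by move=> V [].
  have G0 : G !=set0 by exists U0.
  exists (Meet G); split.
  + exact: meet_inJ.
  + by move=> E SE; apply: sub1_meet => // V [_ uV]; exact: uV.
  + by move=> V JV uV; apply: meet_sub1.
- move=> S SJ S0 _; exists (Meet S); split.
  + exact: meet_inJ.
  + by move=> E SE; exact: meet_sub1.
  + by move=> V JV lV; exact: sub1_meet.
Qed.
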